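(* Let ${\cal D}$ be a set of directions with $0\le\alpha({\cal D})\le\pi/2$, and let $r=1-O(\sqrt{\log n/n})$ (i.e. $r = 1 - c\sqrt{\log n / n}$ for a fixed constant $c>0$). Then the set of points of the unit disk $B_1$ that are unsafe relative to $B_r$ can be covered by a union of $O(1)$ caps of $B_1$, where the base of each such cap has length $O((\log n/n)^{1/4})$ and its height is $O(\sqrt{\log n/n})$.
   Context: $B_r$ denotes the disk of radius $r$ centered at the origin $o$. A cap of $B_1$ is a region of $B_1$ cut off by a chord (its base); its height is the maximal distance from the chord to the arc. A set of directions is a set ${\cal D}$ of unit vectors in $\mathbb{R}^2$ such that $v\in{\cal D}$ implies $-v\in{\cal D}$. A pair $v_1,v_2\in{\cal D}$ is a ${\cal D}$-pair if $v_2$ is counterclockwise from $v_1$ and no vector of ${\cal D}$ lies strictly between them; $\alpha({\cal D})$ is the maximum over ${\cal D}$-pairs of the counterclockwise angle from $v_1$ to $v_2$. With $\mathrm{pspan}(u_1,u_2)$ the open wedge of positive combinations, ${\cal Q}({\cal D})$ consists of the open half-planes bounded by lines through the origin with direction in ${\cal D}$ together with the wedges $\mathrm{pspan}(-v_1,v_2)$ and $\mathrm{pspan}(v_1,-v_2)$ for every ${\cal D}$-pair $(v_1,v_2)$; ${\cal T}({\cal D})$ is the set of all their translates, and $\mathcal{CH}_{{\cal D}}(S)=\mathbb{R}^2\setminus\bigcup\{I\in{\cal T}({\cal D}) : I\cap S=\emptyset\}$. A point $p\in B_1$ is safe relative to $B_r$ if the segment $op$ is contained in $\mathcal{CH}_{{\cal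 D}}(B_r\cup\{p\})$; otherwise it is unsafe. The implied constants in $O(\cdot)$ may depend on the constant in the definition of $r$ but not on $n$ or ${\cal D}$. *)

(* Defs.v *)
From Stdlib Require Import Reals Lra List.
Open Scope R_scope.

Definition pt := (R * R)%type.

Definition padd (p q : pt) : pt := (fst p + fst q, snd p + snd q).
Definition psub (p q : pt) : pt := (fst p - fst q, snd p - snd q).
Definition pscale (a : R) (p : pt) : pt := (a * fst p, a * snd p).
Definition popp (p : pt) : pt := (- fst p, - snd p).
Definition dot (p q : pt) : R := fst p * fst q + snd p * snd q.
Definition cross (p q : pt) : R := fst p * snd q - snd p * fst q.
Definition pnorm (p : pt) : R := sqrt (dot p p).

Definition origin : pt := (0, 0).

Definition disk (r : R) (p : pt) : Prop := pnorm p <= r.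

Definition rot (th : R) (p : pt) : pt :=
  (cos th * fst p - sin th * snd p, sin th * fst p + cos th * snd p).

Definition ccw_angle (u w : pt) (th : R) : Prop :=
  0 <= th < 2 * PI /\ w = rot th u.

Definition direction_set (D : pt -> Prop) : Prop :=
  (forall v, D v -> dot v v = 1) /\ (forall v, D v -> D (popp v)).

Definition finite_set (D : pt -> Prop) : Prop :=
  exists l : list pt, forall v, D v <-> In v l.

Definition Dpair (D : pt -> Prop) (v1 v2 : pt) : Prop :=
  D v1 /\ D v2 /\ v1 <> v2 /\
  exists th, ccw_angle v1 v2 th /\
    forall w phi, D w -> ccw_angle v1 w phi -> ~ (0 < phi < th).

(* alpha(D) <= a : every D-pair spans a counterclockwise angle <= a
   (alpha(D) is the maximum of these angles). *)
Definition alpha_le (D : pt -> Prop) (a : R) : Prop :=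
  forall v1 v2 th, Dpair D v1 v2 -> ccw_angle v1 v2 th -> th <= a.

Definition pspan (u1 u2 : pt) (x : pt) : Prop :=
  exists a b, 0 < a /\ 0 < b /\ x = padd (pscale a u1) (pscale b u2).

Definition inQ (D : pt -> Prop) (I : pt -> Prop) : Prop :=
  (exists d, D d /\ forall x, I x <-> 0 < cross d x) \/
  (exists d, D d /\ forall x, I x <-> cross d x < 0) \/
  (exists v1 v2, Dpair D v1 v2 /\
     ((forall x, I x <-> pspan (popp v1) v2 x) \/
      (forall x, I x <-> pspan v1 (popp v2) x))).

Definition inT (D : pt -> Prop) (I : pt -> Prop) : Prop :=
  exists Q t, inQ D Q /\ forall x, I x <-> Q (psub x t).

Definition CH_D (D : pt -> Prop) (S : pt -> Prop) (x : pt) : Prop :=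
  forall I, inT D I -> (forall y, I y -> ~ S y) -> ~ I x.

Definition segment (p q : pt) (x : pt) : Prop :=
  exists s, 0 <= s <= 1 /\ x = padd (pscale (1 - s) p) (pscale s q).

Definition safe (D : pt -> Prop) (r : R) (p : pt) : Prop :=
  disk 1 p /\
  forall x, segment origin p x ->
    CH_D D (fun y => disk r y \/ y = p) x.

Definition unsafe (D : pt -> Prop) (r : R) (p : pt) : Prop :=
  disk 1 p /\ ~ safe D r p.

(* The cap of B_1 cut off by the chord {x : dot u x = t} (u a unit vector,
   -1 < t < 1), on the side dot u x >= t.  Its height is 1 - t and its base
   (the chord) has length 2 * sqrt (1 - t^2). *)
Definition cap (u : pt) (t : R) (x : pt) : Prop :=
  disk 1 x /\ t <= dot u x.
Definition valid_cap (u : pt) (t : R) : Prop := dot u u = 1 /\ -1 < t < 1.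
Definition cap_height (t : R) : R := 1 - t.
Definition cap_base (t : R) : R := 2 * sqrt (1 - t * t).

Definition lnn (n : nat) : R := ln (INR n) / INR n.

(* Main.v *)
Require Import Defs.
From Stdlib Require Import Reals List Lra Psatz Classical.
Open Scope R_scope.

Definition rot90 (v : pt) : pt := (- snd v, fst v).

Lemma unit_split (v w : pt) : dot v v = 1 ->
  dot v w * dot v w + cross v w * cross v w = dot w w.
Proof. destruct v as [a b], w as [c d]; unfold dot, cross; simpl; intro H.
  replace (c*c+d*d) with ((a*a+b*b)*(c*c+d*d)) by (rewrite H; ring). ring. Qed.

Lemma gap_lemma (D : pt -> Prop) (v1 v2 : pt) (th : R) :
  direction_set D -> D v1 -> ccw_angle v1 v2 th -> 0 <= th <= PI ->
  (forall w phi, D w -> ccw_angle v1 w phi -> ~ (0 < phi < th)) ->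
  forall w, D w -> 0 < cross v1 w -> dot v1 w <= cos th.
Proof.
  intros [Hu _] Hv1 Hang Hth Hgap w Hw Hc.
  destruct (Rle_or_lt (dot v1 w) (cos th)) as [h|h]; [exact h|exfalso].
  pose proof (Hu _ Hv1) as U1. pose proof (Hu _ Hw) as Uw.
  pose proof (unit_split v1 w U1) as Sp. rewrite Uw in Sp.
  assert (Hb : -1 < dot v1 w < 1) by nra.
  pose proof (acos_bound_lt _ Hb) as Hphi.
  set (phi := acos (dot v1 w)) in *.
  assert (Cp : cos phi = dot v1 w) by (unfold phi; apply cos_acos; lra).
  assert (Sph : sin phi = cross v1 w).
  { unfold phi. rewrite sin_acos by lra.
    replace (1 - (dot v1 w)²) with (Rsqr (cross v1 w)) by (unfold Rsqr; lra).
    apply sqrt_Rsqr; lra. }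
  apply (Hgap w phi Hw).
  - unfold ccw_angle. split. { pose proof PI_RGT_0. lra. }
    unfold rot. rewrite Cp, Sph. destruct v1 as [a b], w as [c d].
    unfold dot, cross in *; simpl in *. f_equal; nra.
  - split; [lra|]. apply (cos_decreasing_0 th phi); lra.
Qed.

Lemma pspan_char1 (v1 v2 z : pt) : 0 < cross v1 v2 ->
  (pspan (popp v1) v2 z <-> (0 < 1 * cross v1 z /\ 0 < 1 * cross v2 z)).
Proof.
  intro Hk. split.
  - intros (a & b & Ha & Hb & ->). destruct v1 as [p q], v2 as [u v].
    unfold cross, padd, pscale, popp in *; simpl in *. split; nra.
  - intros [H1 H2]. set (k := cross v1 v2) in *.
    exists (cross v2 z / k), (cross v1 z / k).
    split; [apply Rdiv_lt_0_compat; lra|]. split; [apply Rdiv_lt_0_compat; lra|].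
    unfold k in *. destruct v1 as [p q], v2 as [u v], z as [x y].
    unfold cross, padd, pscale, popp in *; simpl in *. f_equal; field; lra.
Qed.

Lemma pspan_char2 (v1 v2 z : pt) : 0 < cross v1 v2 ->
  (pspan v1 (popp v2) z <-> (0 < -1 * cross v1 z /\ 0 < -1 * cross v2 z)).
Proof.
  intro Hk. split.
  - intros (a & b & Ha & Hb & ->). destruct v1 as [p q], v2 as [u v].
    unfold cross, padd, pscale, popp in *; simpl in *. split; nra.
  - intros [H1 H2]. set (k := cross v1 v2) in *.
    exists (- cross v2 z / k), (- cross v1 z / k).
    split; [apply Rdiv_lt_0_compat; lra|]. split; [apply Rdiv_lt_0_compat; lra|].
    unfold k in *. destruct v1 as [p q], v2 as [u v], z as [x y].
    unfold cross, padd, pscale, popp in *; simpl in *. f_equal; field; lra.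
Qed.

Lemma pure_core (c0 s0 r s g1 d A0 B0 : R) :
  0 <= c0 -> 0 < s0 -> c0*c0 + s0*s0 = 1 -> 0 < r -> 0 <= s <= 1 ->
  g1*g1 + d*d <= 1 ->
  0 < A0 + s*g1 -> 0 < B0 + s*(c0*g1 - s0*d) ->
  ~ (0 < A0 + g1 /\ 0 < B0 + (c0*g1 - s0*d)) ->
  ~ (0 < A0 /\ 0 < B0) ->
  ~ (0 < A0 + r /\ 0 < B0 + r*c0) ->
  ~ (0 < A0 + r*c0 /\ 0 < B0 + r) ->
  c0 * c0 * (r * r) < 1 - r * r /\ (r < g1 \/ r < - d).
Proof.
  intros Hc0 Hs0 Hcs Hr Hs Hn Ix Bx Np N0 Nq1 Nq2.
  assert (s0le : s0 <= 1) by nra.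
  destruct (Rle_or_lt A0 0) as [HA|HA].
  - assert (Hsg : 0 < s*g1) by lra.
    assert (Hg1 : 0 < g1) by (destruct (Rle_or_lt g1 0); [nra|lra]).
    assert (HA1 : 0 < A0 + g1) by nra.
    assert (HB1 : B0 + (c0*g1 - s0*d) <= 0) by (destruct (Rle_or_lt (B0 + (c0*g1 - s0*d)) 0); [lra| exfalso; tauto]).
    assert (HB0 : 0 < B0).
    { destruct (Rle_or_lt B0 0) as [h|h]; [|lra]. exfalso.
      assert (B0 + s * (c0 * g1 - s0 * d) = (1-s)*B0 + s*(B0 + (c0*g1 - s0*d))) by ring.
      nra. }
    assert (HAr : A0 + r <= 0).
    { destruct (Rle_or_lt (A0 + r) 0) as [h|h]; [lra|]. exfalso. apply Nq1. split; nra. }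
    assert (Hg1r : r < g1) by nra.
    assert (H1 : c0 * g1 < s0 * d) by lra.
    assert (H2 : c0 * r <= c0 * g1) by nra.
    assert (Hd : 0 < d) by nra.
    assert (H3 : c0 * r < d) by nra.
    split; [|left; lra].
    assert (0 <= c0 * r) by nra.
    assert ((c0*r)*(c0*r) < d*d) by nra.
    nra.
  - assert (HB0 : B0 <= 0) by (destruct (Rle_or_lt B0 0); [lra| exfalso; tauto]).
    set (g2 := c0*g1 - s0*d) in *.
    assert (Hsg : 0 < s*g2) by lra.
    assert (Hg2 : 0 < g2) by (destruct (Rle_or_lt g2 0); [nra|lra]).
    assert (HB1 : 0 < B0 + g2) by nra.
    assert (HA1 : A0 + g1 <= 0) by (destruct (Rle_or_lt (A0 + g1) 0); [lra| exfalso; tauto]).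
    assert (Hg1 : g1 < 0) by lra.
    assert (HBr : B0 + r <= 0).
    { destruct (Rle_or_lt (B0 + r) 0) as [h|h]; [lra|]. exfalso. apply Nq2. split; nra. }
    assert (Hg2r : r < g2) by nra.
    assert (Hd : r < - d).
    { unfold g2 in Hg2r. assert (c0 * g1 <= 0) by nra.
      assert (r < - s0 * d) by lra. nra. }
    split; [|right; lra].
    set (e := c0*d + s0*g1).
    assert (Hrot : g2*g2 + e*e = g1*g1 + d*d) by (unfold g2, e; nra).
    assert (Hg1e : g1 = c0*g2 + s0*e) by (unfold g2, e; nra).
    assert (H1 : s0 * e < - c0 * g2) by lra.
    assert (H2 : c0 * r <= c0 * g2) by nra.
    assert (He : e < 0) by nra.
    assert (H3 : c0 * r < - e) by nra.
    assert (0 <= c0 * r) by nra.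
    assert ((c0*r)*(c0*r) < e*e) by nra.
    nra.
Qed.

Lemma disk_of (r : R) (q : pt) : 0 <= r -> dot q q = r * r -> disk r q.
Proof. intros Hr Hq. unfold disk, pnorm. rewrite Hq, sqrt_square; lra. Qed.

Lemma wedge_core (v1 v2 t p : pt) (c0 s0 sg r s : R) (I : pt -> Prop) :
  dot v1 v1 = 1 -> v2 = (c0 * fst v1 - s0 * snd v1, s0 * fst v1 + c0 * snd v1) ->
  0 <= c0 -> 0 < s0 -> c0*c0 + s0*s0 = 1 -> (sg = 1 \/ sg = -1) -> 0 < r ->
  0 <= s <= 1 -> dot p p <= 1 ->
  (forall y, I y <-> (0 < sg * cross v1 (psub y t) /\ 0 < sg * cross v2 (psub y t))) ->
  I (padd (pscale (1 - s) origin) (pscale s p)) ->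
  (forall y, I y -> ~ (disk r y \/ y = p)) ->
  c0 * c0 * (r * r) < 1 - r * r /\
  (r < dot v1 p \/ r < - dot v1 p \/ r < cross v1 p \/ r < - cross v1 p).
Proof.
  intros U1 Hv2 Hc0 Hs0 Hcs Hsg Hr Hs Hp HI Ix Hdis.
  assert (Hsg2 : sg * sg = 1) by (destruct Hsg; subst; ring).
  assert (N0 := Hdis origin). assert (Np := Hdis p).
  set (q1 := (r * sg * (- snd v1), r * sg * fst v1)).
  set (q2 := (r * sg * (- snd v2), r * sg * fst v2)).
  assert (Nq1 := Hdis q1). assert (Nq2 := Hdis q2).
  assert (U2 : dot v2 v2 = 1).
  { rewrite Hv2. destruct v1 as [a b]; unfold dot in *; simpl in *.
    transitivity ((c0*c0+s0*s0)*(a*a+b*b)); [ring| rewrite Hcs, U1; ring]. }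
  assert (D0 : disk r origin) by (unfold disk, pnorm, dot, origin; simpl; replace (0*0+0*0) with 0 by ring; rewrite sqrt_0; lra).
  assert (Dq1 : disk r q1).
  { apply disk_of; [lra|]. unfold q1; destruct v1 as [a b]; unfold dot in *; simpl in *.
    transitivity (r*r*(sg*sg)*(a*a+b*b)); [ring| rewrite Hsg2, U1; ring]. }
  assert (Dq2 : disk r q2).
  { apply disk_of; [lra|]. unfold q2; destruct v2 as [a b]; unfold dot in *; simpl in *.
    transitivity (r*r*(sg*sg)*(a*a+b*b)); [ring| rewrite Hsg2, U2; ring]. }
  rewrite HI in N0, Np, Nq1, Nq2, Ix.
  assert (K := pure_core c0 s0 r s (sg * cross v1 p) (sg * dot v1 p)
     (- sg * cross v1 t) (- sg * cross v2 t) Hc0 Hs0 Hcs Hr Hs).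
  subst v2. destruct v1 as [a b], p as [px py], t as [tx ty].
  unfold q1, q2, dot, cross, psub, padd, pscale, origin in *; simpl in *.
  cut (c0 * c0 * (r * r) < 1 - r * r /\ (r < sg * (a * py - b * px) \/ r < - (sg * (a * px + b * py)))).
  { intros [K1 K2]. split; [exact K1|]. destruct Hsg; subst sg; lra. }
  apply K.
  - replace ((sg*(a*py - b*px))*(sg*(a*py-b*px)) + (sg*(a*px+b*py))*(sg*(a*px+b*py)))
      with ((sg*sg)*(a*a+b*b)*(px*px+py*py)) by ring. rewrite Hsg2, U1. lra.
  - eapply Rlt_le_trans; [exact (proj1 Ix)|right; ring].
  - eapply Rlt_le_trans; [exact (proj2 Ix)|right; ring].
  - intros [h1 h2]. apply Np; [split|right; reflexivity].
    + eapply Rlt_le_trans; [exact h1|right; ring].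
    + eapply Rlt_le_trans; [exact h2|right; ring].
  - intros [h1 h2]. apply N0; [split|left; exact D0].
    + eapply Rlt_le_trans; [exact h1|right; ring].
    + eapply Rlt_le_trans; [exact h2|right; ring].
  - intros [h1 h2]. apply Nq1; [split|left; exact Dq1].
    + eapply Rlt_le_trans; [exact h1|right].
      transitivity (r*(sg*sg)*(a*a+b*b) + - sg * (a * ty - b * tx)); [rewrite Hsg2, U1; ring|ring].
    + eapply Rlt_le_trans; [exact h2|right].
      transitivity (r*(sg*sg)*(c0*(a*a+b*b)) + - sg * ((c0 * a - s0 * b) * ty - (s0 * a + c0 * b) * tx)); [rewrite Hsg2, U1; ring|ring].
  - intros [h1 h2]. apply Nq2; [split|left; exact Dq2].
    + eapply Rlt_le_trans; [exact h1|right].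
      transitivity (r*(sg*sg)*(c0*(a*a+b*b)) + - sg * (a * ty - b * tx)); [rewrite Hsg2, U1; ring|ring].
    + eapply Rlt_le_trans; [exact h2|right].
      transitivity (r*(sg*sg)*((c0*c0+s0*s0)*(a*a+b*b)) + - sg * ((c0 * a - s0 * b) * ty - (s0 * a + c0 * b) * tx)); [rewrite Hsg2, U1, Hcs; ring|ring].
Qed.

Definition NR (D : pt -> Prop) (v : pt) : Prop :=
  D v /\ exists c0, 0 <= c0 <= 1/6 /\ forall w, D w -> 0 < cross v w -> dot v w <= c0.

Lemma unsafe_char (D : pt -> Prop) (r : R) (p : pt) :
  direction_set D -> alpha_le D (PI / 2) -> 99/100 <= r ->
  unsafe D r p ->
  exists v, NR D v /\
    (r < dot v p \/ r < - dot v p \/ r < cross v p \/ r < - cross v p).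
Proof.
  intros HD Hal Hr [Hp1 Hns].
  assert (Hpp : dot p p <= 1).
  { destruct (Rle_or_lt (dot p p) 1) as [h|h]; [exact h|exfalso].
    unfold disk, pnorm in Hp1. assert (sqrt 1 < sqrt (dot p p)) by (apply sqrt_lt_1_alt; lra).
    rewrite sqrt_1 in H. lra. }
  destruct (classic (forall x, segment origin p x -> CH_D D (fun y => disk r y \/ y = p) x)) as [Hall|Hn].
  { exfalso. apply Hns. split; assumption. }
  apply not_all_ex_not in Hn. destruct Hn as [x Hx].
  apply imply_to_and in Hx. destruct Hx as [[s [Hs Hxs]] Hch].
  unfold CH_D in Hch. apply not_all_ex_not in Hch. destruct Hch as [I HI].
  apply imply_to_and in HI. destruct HI as [HIT HI].
  apply imply_to_and in HI. destruct HI as [Hdis HIx]. apply NNPP in HIx.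
  destruct HIT as (Q & t & HQ & HIQ).
  assert (D0 : disk r origin) by (unfold disk, pnorm, dot, origin; simpl; replace (0*0+0*0) with 0 by ring; rewrite sqrt_0; lra).
  assert (N0 := Hdis origin). assert (Np := Hdis p).
  subst x.
  destruct HQ as [[d [Hd HQd]]|[[d [Hd HQd]]|(v1 & v2 & Hpair & HQw)]].
  - exfalso. rewrite HIQ, HQd in HIx, N0, Np.
    destruct d as [a b], p as [px py], t as [tx ty].
    unfold cross, psub, padd, pscale, origin in *; simpl in *.
    assert (~ 0 < a * (0 - ty) - b * (0 - tx)) by (intro h; apply (N0 h); left; exact D0).
    assert (~ 0 < a * (py - ty) - b * (px - tx)) by (intro h; apply (Np h); right; reflexivity).
    nra.
  - exfalso. rewrite HIQ, HQd in HIx, N0, Np.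
    destruct d as [a b], p as [px py], t as [tx ty].
    unfold cross, psub, padd, pscale, origin in *; simpl in *.
    assert (~ a * (0 - ty) - b * (0 - tx) < 0) by (intro h; apply (N0 h); left; exact D0).
    assert (~ a * (py - ty) - b * (px - tx) < 0) by (intro h; apply (Np h); right; reflexivity).
    nra.
  - clear N0 Np.
    destruct Hpair as (Hv1 & Hv2 & Hneq & th & Hang & Hgap).
    assert (Hth2 : th <= PI / 2) by (apply (Hal v1 v2 th); [repeat split; auto; exists th; split; auto|exact Hang]).
    destruct Hang as [[Hth0 _] Hrot].
    assert (Hthp : 0 < th).
    { destruct (Rle_or_lt th 0) as [h|h]; [|exact h]. exfalso. apply Hneq.
      assert (th = 0) by lra. subst th. rewrite Hrot. unfold rot. rewrite cos_0, sin_0.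
      destruct v1; simpl; f_equal; ring. }
    pose proof PI_RGT_0 as HPI.
    assert (Hc0 : 0 <= cos th) by (apply cos_ge_0; lra).
    assert (Hs0 : 0 < sin th) by (apply sin_gt_0; lra).
    assert (Hcs : cos th * cos th + sin th * sin th = 1) by (pose proof (sin2_cos2 th); unfold Rsqr in *; lra).
    assert (U1 : dot v1 v1 = 1) by (apply (proj1 HD); exact Hv1).
    assert (Hk : 0 < cross v1 v2).
    { rewrite Hrot. unfold rot. destruct v1 as [a b]; unfold cross, dot in *; simpl in *.
      replace (a * (sin th * a + cos th * b) - b * (cos th * a - sin th * b)) with (sin th * (a*a+b*b)) by ring.
      rewrite U1; lra. }
    assert (Hv2f : v2 = (cos th * fst v1 - sin th * snd v1, sin th * fst v1 + cos th * snd v1)) by (rewrite Hrot; reflexivity).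
    assert (Hmain : exists sg, (sg = 1 \/ sg = -1) /\
       forall y, I y <-> (0 < sg * cross v1 (psub y t) /\ 0 < sg * cross v2 (psub y t))).
    { destruct HQw as [HQw|HQw].
      - exists 1. split; [left; reflexivity|]. intro y. rewrite HIQ, HQw. apply pspan_char1; exact Hk.
      - exists (-1). split; [right; reflexivity|]. intro y. rewrite HIQ, HQw. apply pspan_char2; exact Hk. }
    destruct Hmain as [sg [Hsg HIsg]].
    destruct (wedge_core v1 v2 t p (cos th) (sin th) sg r s I U1 Hv2f Hc0 Hs0 Hcs Hsg ltac:(lra) Hs Hpp HIsg HIx Hdis)
      as [Hnear Hcov].
    exists v1. split; [|exact Hcov].
    split; [exact Hv1|]. exists (cos th). split.
    + split; [exact Hc0|]. destruct (Rle_or_lt (cos th) (1/6)) as [h|h]; [exact h|exfalso].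
      assert (r*r >= 9801/10000) by nra. assert (cos th * cos th > 1/36) by nra.
      assert (cos th * cos th * (r*r) >= 1/36 * (9801/10000)) by nra. lra.
    + apply (gap_lemma D v1 v2 th HD Hv1); [split; [split; lra|exact Hrot]|lra|exact Hgap].
Qed.

Lemma nr_dot (D : pt -> Prop) (u v : pt) : direction_set D ->
  NR D u -> NR D v -> cross u v <> 0 -> - (1/6) <= dot u v <= 1/6.
Proof.
  intros [HU Hneg] [Hu (cu & Hcu & Gu)] [Hv (cv & Hcv & Gv)] Hc.
  assert (E1 : dot v (popp u) = - dot u v) by (destruct u, v; unfold dot, popp; simpl; ring).
  assert (E2 : dot u (popp v) = - dot u v) by (destruct u, v; unfold dot, popp; simpl; ring).
  assert (E3 : dot v u = dot u v) by (destruct u, v; unfold dot; simpl; ring).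
  assert (F1 : cross v (popp u) = cross u v) by (destruct u, v; unfold cross, popp; simpl; ring).
  assert (F2 : cross u (popp v) = - cross u v) by (destruct u, v; unfold cross, popp; simpl; ring).
  assert (F3 : cross v u = - cross u v) by (destruct u, v; unfold cross; simpl; ring).
  destruct (Rlt_or_le 0 (cross u v)) as [h|h].
  - pose proof (Gu v Hv h). pose proof (Gv (popp u) (Hneg u Hu) ltac:(rewrite F1; exact h)). lra.
  - assert (h' : cross u v < 0) by lra.
    pose proof (Gu (popp v) (Hneg v Hv) ltac:(rewrite F2; lra)).
    pose proof (Gv u Hu ltac:(rewrite F3; lra)). lra.
Qed.

Lemma parallel (u v : pt) : dot u u = 1 -> dot v v = 1 -> cross u v = 0 -> v = u \/ v = popp u.
Proof.
  intros Hu Hv Hc. pose proof (unit_split u v Hu) as S. rewrite Hv, Hc in S.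
  assert (Hd : dot u v = 1 \/ dot u v = -1) by nra.
  assert (Dec : v = (dot u v * fst u - cross u v * snd u, dot u v * snd u + cross u v * fst u)).
  { destruct u as [a b], v as [x y]. unfold dot, cross in *; simpl in *. f_equal.
    - transitivity (x * (a*a+b*b)); [rewrite Hu; ring| ring].
    - transitivity (y * (a*a+b*b)); [rewrite Hu; ring| ring]. }
  rewrite Hc in Dec. destruct Hd as [H|H]; rewrite H in Dec; [left|right];
  rewrite Dec; destruct u; unfold popp; simpl; f_equal; ring.
Qed.

Lemma triple (u v w : pt) : dot u u = 1 -> dot v v = 1 -> dot w w = 1 ->
  - (1/6) <= dot u v <= 1/6 -> - (1/6) <= dot u w <= 1/6 -> - (1/6) <= dot v w <= 1/6 -> False.
Proof.
  intros Hu Hv Hw H1 H2 H3.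
  assert (G : dot u u * dot v v * dot w w - dot u u * (dot v w * dot v w) - dot v v * (dot u w * dot u w)
    - dot w w * (dot u v * dot u v) + 2 * dot u v * dot u w * dot v w = 0).
  { destruct u, v, w; unfold dot; simpl; ring. }
  rewrite Hu, Hv, Hw in G.
  set (a := dot u v) in *. set (b := dot u w) in *. set (d := dot v w) in *.
  assert (a*a <= 1/36) by nra. assert (b*b <= 1/36) by nra. assert (d*d <= 1/36) by nra.
  assert (Hab : - (1/36) <= a*b <= 1/36) by (split; nra).
  assert (- (1/216) <= a*b*d) by nra.
  lra.
Qed.

Definition capsOf (a : pt) (r : R) : list (pt * R) :=
  (a, r) :: (popp a, r) :: (rot90 a, r) :: (popp (rot90 a), r) :: nil.

Lemma caps_props (a : pt) (r : R) ut : dot a a = 1 -> In ut (capsOf a r) ->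
  dot (fst ut) (fst ut) = 1 /\ snd ut = r.
Proof.
  intros Ha Hin. simpl in Hin.
  destruct a as [x y]; unfold dot in *; simpl in *.
  repeat (destruct Hin as [<-|Hin]; [simpl; split; [lra|reflexivity]|]).
  contradiction.
Qed.

Lemma cover_pt (a v p : pt) (r : R) : (v = a \/ v = popp a) -> disk 1 p ->
  (r < dot v p \/ r < - dot v p \/ r < cross v p \/ r < - cross v p) ->
  exists ut, In ut (capsOf a r) /\ cap (fst ut) (snd ut) p.
Proof.
  intros Hv Hp Hc.
  assert (E1 : dot (popp a) p = - dot a p) by (destruct a, p; unfold dot, popp; simpl; ring).
  assert (E2 : cross (popp a) p = - cross a p) by (destruct a, p; unfold cross, popp; simpl; ring).
  assert (E3 : dot (rot90 a) p = cross a p) by (destruct a, p; unfold dot, cross, rot90; simpl; ring).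
  assert (E4 : dot (popp (rot90 a)) p = - cross a p) by (destruct a, p; unfold dot, cross, rot90, popp; simpl; ring).
  assert (H : r < dot a p \/ r < dot (popp a) p \/ r < dot (rot90 a) p \/ r < dot (popp (rot90 a)) p).
  { rewrite E1, E3, E4. destruct Hv as [->| ->]; [|rewrite E1, E2 in Hc]; lra. }
  unfold cap, capsOf; simpl.
  destruct H as [H|[H|[H|H]]];
  [exists (a, r) | exists (popp a, r) | exists (rot90 a, r) | exists (popp (rot90 a), r)]; simpl;
  (split; [tauto| split; [exact Hp| lra]]).
Qed.

Lemma ln_le_2sqrt (x : R) : 1 < x -> ln x <= 2 * sqrt x.
Proof.
  intro H. assert (Hs : 0 < sqrt x) by (apply sqrt_lt_R0; lra).
  assert (E : ln x = 2 * ln (sqrt x)).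
  { rewrite <- (sqrt_sqrt x) at 1 by lra. rewrite ln_mult by lra. ring. }
  pose proof (exp_ineq1_le (ln (sqrt x))) as Hi. rewrite exp_ln in Hi by lra. lra.
Qed.

Theorem lemma3p12 :
  forall c : R, 0 < c ->
  exists (K : nat) (C1 C2 : R) (N : nat), 0 < C1 /\ 0 < C2 /\
  forall (n : nat), (N <= n)%nat ->
  forall D : pt -> Prop,
    direction_set D -> finite_set D -> (exists v, D v) ->
    alpha_le D (PI / 2) ->
    let r := 1 - c * sqrt (lnn n) in
    exists caps : list (pt * R),
      (length caps <= K)%nat /\
      (forall ut, In ut caps ->
         valid_cap (fst ut) (snd ut) /\
         cap_base (snd ut) <= C1 * sqrt (sqrt (lnn n)) /\
         cap_height (snd ut) <= C2 * sqrt (lnn n)) /\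
      (forall p, unsafe D r p -> exists ut, In ut caps /\ cap (fst ut) (snd ut) p).
Proof.
  intros c Hc.
  set (e := 1 / (100 * c)).
  assert (He : 0 < e) by (unfold e; apply Rdiv_lt_0_compat; lra).
  set (dl := e * e).
  assert (Hdl : 0 < dl) by (unfold dl; nra).
  destruct (INR_unbounded (4 / (dl * dl) + 2)) as [N HN].
  assert (H4 : 0 < 4 / (dl * dl)) by (apply Rdiv_lt_0_compat; nra).
  exists 8%nat, (2 * sqrt (2 * c)), c, N.
  split; [apply Rmult_lt_0_compat; [lra| apply sqrt_lt_R0; lra]|].
  split; [exact Hc|].
  intros n Hn D HD Hfin Hne Hal. cbv zeta.
  assert (Hnr : INR N <= INR n) by (apply le_INR; exact Hn).
  assert (Hn1 : 1 < INR n) by lra.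
  assert (Hln : 0 < ln (INR n)) by (rewrite <- ln_1; apply ln_increasing; lra).
  assert (HL : 0 < lnn n) by (unfold lnn; apply Rdiv_lt_0_compat; lra).
  assert (HLd : lnn n <= dl).
  { unfold lnn. apply Rmult_le_reg_r with (INR n); [lra|].
    unfold Rdiv. rewrite Rmult_assoc, Rinv_l by lra. rewrite Rmult_1_r.
    pose proof (ln_le_2sqrt _ Hn1) as Hl2.
    set (m := sqrt (INR n)) in *.
    assert (Hm : m * m = INR n) by (unfold m; apply sqrt_sqrt; lra).
    assert (Hm0 : 0 < m) by (unfold m; apply sqrt_lt_R0; lra).
    assert (Hq : 4 < dl * dl * INR n).
    { assert (4 / (dl*dl) < INR n) by lra.
      apply Rmult_lt_compat_l with (r := dl*dl) in H; [|nra].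
      unfold Rdiv in H. rewrite <- Rmult_assoc, (Rmult_comm (dl*dl) 4), Rmult_assoc, Rinv_r in H by nra. lra. }
    rewrite <- Hm in Hq.
    assert (Hp : 0 < dl * m) by nra.
    assert (Hsq : dl*dl*(m*m) = (dl*m)*(dl*m)) by ring.
    assert (2 < dl * m) by nra.
    assert (dl * INR n = (dl*m)*m) by (rewrite <- Hm; ring).
    nra. }
  assert (HsL : sqrt (lnn n) <= e).
  { rewrite <- (sqrt_square e) by lra. apply sqrt_le_1_alt. exact HLd. }
  assert (HsL0 : 0 < sqrt (lnn n)) by (apply sqrt_lt_R0; exact HL).
  assert (Hce : c * e = 1/100) by (unfold e; field; lra).
  remember (1 - c * sqrt (lnn n)) as r eqn:Hr.
  assert (Hr1 : 99/100 <= r) by (subst r; nra).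
  assert (Hr2 : r < 1) by (subst r; nra).
  assert (Hcapok : forall a ut, dot a a = 1 -> In ut (capsOf a r) ->
     valid_cap (fst ut) (snd ut) /\
     cap_base (snd ut) <= 2 * sqrt (2 * c) * sqrt (sqrt (lnn n)) /\
     cap_height (snd ut) <= c * sqrt (lnn n)).
  { intros a ut Ha Hin. destruct (caps_props a r ut Ha Hin) as [U ->].
    split; [split; [exact U| lra]|]. split.
    - unfold cap_base. rewrite Rmult_assoc. apply Rmult_le_compat_l; [lra|].
      rewrite <- sqrt_mult by lra. apply sqrt_le_1_alt. subst r. nra.
    - unfold cap_height. lra. }
  destruct (classic (exists a, NR D a)) as [[a Ha]|Hno].
  2:{ exists nil. split; [simpl; lia|]. split; [intros ut []|].
      intros p Hp. exfalso. destruct (unsafe_char D r p HD Hal Hr1 Hp) as [v [Hv _]].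
      apply Hno; exists v; exact Hv. }
  assert (Ua : dot a a = 1) by (apply (proj1 HD); exact (proj1 Ha)).
  destruct (classic (exists b, NR D b /\ cross a b <> 0)) as [[b [Hb Hab]]|Hnob].
  - assert (Ub : dot b b = 1) by (apply (proj1 HD); exact (proj1 Hb)).
    exists (capsOf a r ++ capsOf b r). split; [simpl; lia|]. split.
    + intros ut Hin. apply in_app_or in Hin. destruct Hin as [Hin|Hin];
      [exact (Hcapok a ut Ua Hin)|exact (Hcapok b ut Ub Hin)].
    + intros p Hp. destruct (unsafe_char D r p HD Hal Hr1 Hp) as [v [Hv Hcov]].
      assert (Uv : dot v v = 1) by (apply (proj1 HD); exact (proj1 Hv)).
      destruct (Req_dec (cross a v) 0) as [Hav|Hav].
      * destruct (cover_pt a v p r (parallel a v Ua Uv Hav) (proj1 Hp) Hcov) as [ut [Hin Hcap]].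
        exists ut. split; [apply in_or_app; left; exact Hin| exact Hcap].
      * destruct (Req_dec (cross b v) 0) as [Hbv|Hbv].
        -- destruct (cover_pt b v p r (parallel b v Ub Uv Hbv) (proj1 Hp) Hcov) as [ut [Hin Hcap]].
           exists ut. split; [apply in_or_app; right; exact Hin| exact Hcap].
        -- exfalso. apply (triple a b v Ua Ub Uv).
           ++ exact (nr_dot D a b HD Ha Hb Hab).
           ++ exact (nr_dot D a v HD Ha Hv Hav).
           ++ exact (nr_dot D b v HD Hb Hv Hbv).
  - exists (capsOf a r). split; [simpl; lia|]. split.
    + intros ut Hin. exact (Hcapok a ut Ua Hin).
    + intros p Hp. destruct (unsafe_char D r p HD Hal Hr1 Hp) as [v [Hv Hcov]].
      assert (Uv : dot v v = 1) by (apply (proj1 HD); exact (proj1 Hv)).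
      assert (Hav : cross a v = 0).
      { destruct (Req_dec (cross a v) 0) as [h|h]; [exact h|]. exfalso. apply Hnob. exists v. split; assumption. }
      exact (cover_pt a v p r (parallel a v Ua Uv Hav) (proj1 Hp) Hcov).
Qed.
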